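(* Let $\mathcal{A}=\{\alpha_1<\dots<\alpha_m\}\subset(0,1)$. If the base forecasts are point forecasts, $b_t=[k_t,\dots,k_t]$ for some $k_t\in\mathbb{R}$, and $|y_t-k_t|\le R$ for all $t$, then the MultiQT iterates (learning rate $\eta>0$, initial hidden offset $\tilde\theta_1\in\mathcal{K}$) satisfy $\|\theta_t-\tilde\theta_t\|_2\le\frac{\eta|\mathcal{A}|^{3/2}}{\sqrt3}$ for all $t$.
   Context: $\mathcal{K}=\{x\in\mathbb{R}^m:x_1\le\dots\le x_m\}$; $\Pi_C$ Euclidean projection; $C-v=\{x-v:x\in C\}$. MultiQT: for $t=1,2,\dots$, played offset $\theta_t=\Pi_{\mathcal{K}-b_t}(\tilde\theta_t)$, forecast $q_t=b_t+\theta_t$, $\mathrm{cov}_t^{\alpha}=\mathbb{1}\{y_t\le q_t^{\alpha}\}$, hidden update $\tilde\theta_{t+1}^{\alpha}=\tilde\theta_t^{\alpha}-\eta(\mathrm{cov}_t^{\alpha}-\alpha)$. *)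

(* Defs.v *)
From mathcomp Require Import all_boot all_order all_algebra.
From mathcomp Require Import reals.
Set Implicit Arguments. Unset Strict Implicit. Unset Printing Implicit Defensive.
Import Order.TTheory GRing.Theory Num.Theory.
Local Open Scope ring_scope.

Section MultiQT.
Variable R : realType.

Definition isoK (m : nat) (x : 'I_m -> R) : Prop :=
  forall i j : 'I_m, (i <= j)%N -> x i <= x j.

Definition isoK_shift (m : nat) (v : 'I_m -> R) (x : 'I_m -> R) : Prop :=
  isoK (fun i => x i + v i).

Definition norm2 (m : nat) (x : 'I_m -> R) : R :=
  Num.sqrt (\sum_(i < m) x i ^+ 2).

Definition is_proj (m : nat) (C : ('I_m -> R) -> Prop) (z p : 'I_m -> R) : Prop :=
  C p /\ forall x, C x -> norm2 (fun i => z i - p i) <= norm2 (fun i => z i - x i).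

End MultiQT.

(* Main.v *)
Require Import Defs.
From mathcomp Require Import all_boot all_order all_algebra.
From mathcomp Require Import reals.
From mathcomp Require Import ring lra.
Import Order.TTheory GRing.Theory Num.Theory.
Local Open Scope ring_scope.
Set Implicit Arguments. Unset Strict Implicit.

Section Aux.
Variable R : realType.

Lemma sq_expand m (a : 'I_m -> R) (P : pred 'I_m) (e : R) :
  \sum_i (a i + e * (P i)%:R) ^+ 2 =
  \sum_i a i ^+ 2 + 2 * e * (\sum_i a i * (P i)%:R) + e ^+ 2 * \sum_i ((P i)%:R : R).
Proof.
rewrite mulr_sumr mulr_sumr -!big_split /=; apply: eq_bigr => i _.
case: (P i) => /=; rewrite ?mulr1 ?mulr0; ring.
Qed.

Lemma sumsq_ge0 m (a : 'I_m -> R) : 0 <= \sum_i a i ^+ 2.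
Proof. by apply: sumr_ge0 => i _; rewrite sqr_ge0. Qed.

Lemma norm2_le m (f g : 'I_m -> R) : norm2 f <= norm2 g ->
  \sum_i f i ^+ 2 <= \sum_i g i ^+ 2.
Proof. by rewrite /norm2 ler_sqrt // sumsq_ge0. Qed.

Lemma iso_shift_const m (v : 'I_m -> R) c x : (forall i, v i = c) ->
  isoK_shift v x <-> isoK x.
Proof.
move=> Hv; rewrite /isoK_shift /isoK; split=> H i j Hij.
  by have := H i j Hij; rewrite !Hv lerD2r.
by rewrite !Hv lerD2r; apply: H.
Qed.

Definition Ssum {m : nat} (a : 'I_m -> R) (l : nat) := \sum_i a i * ((i < l)%N%:R : R).

Lemma Ssum_diff m (a : 'I_m -> R) (j : 'I_m) : Ssum a j.+1 - Ssum a j = a j.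
Proof.
rewrite /Ssum -sumrB (bigD1 j) //= ltnSn ltnn mulr1 mulr0 subr0 big1 ?addr0 //.
move=> i /eqP Hij; rewrite -mulrBr.
have -> : (i < j.+1)%N = (i < j)%N.
  rewrite ltnS leq_eqVlt; case: eqP => // H; exfalso; apply: Hij; exact: val_inj.
by rewrite subrr mulr0.
Qed.

Lemma proj_S_ge0 m (v : 'I_m -> R) c (z p : 'I_m -> R) : (forall i, v i = c) ->
  is_proj (isoK_shift v) z p -> forall l, 0 <= Ssum (fun i => z i - p i) l.
Proof.
move=> Hv [Hp Hmin] l; set a := (fun i => z i - p i).
rewrite leNgt; apply/negP => HS.
set N := \sum_(i : 'I_m) (((i < l)%N)%:R : R).
have N0 : 0 <= N by apply: sumr_ge0 => i _; rewrite ler0n.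
set e := - Ssum a l / (N + 1).
have e0 : 0 < e by rewrite divr_gt0 // ?oppr_gt0 //; lra.
have eN : e * N <= - Ssum a l.
  rewrite /e mulrAC ler_pdivrMr; last lra.
  have : 0 <= - Ssum a l by lra. nra.
have := Hmin (fun i => p i - e * ((i < l)%N)%:R).
have Hx : isoK_shift v (fun i => p i - e * ((i < l)%N)%:R).
  apply/(iso_shift_const _ Hv) => i j Hij.
  have Hp' := (iso_shift_const _ Hv).1 Hp i j Hij.
  have : ((j < l)%N%:R : R) <= (i < l)%N%:R.
    by rewrite ler_nat; case: (ltnP j l) => // Hj; rewrite (leq_ltn_trans Hij Hj).
  move=> H; nra.
move=> /(_ Hx) /norm2_le.
have -> : \sum_i (z i - (p i - e * ((i < l)%N)%:R)) ^+ 2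
   = \sum_i (a i + e * ((fun i : 'I_m => (i < l)%N) i)%:R) ^+ 2.
  by apply: eq_bigr => i _; rewrite /a; congr (_ ^+ 2); ring.
rewrite sq_expand -/N -/(Ssum a l).
have : e * (e * N + Ssum a l) <= 0 by rewrite pmulr_rle0 //; lra.
rewrite [X in _ -> X <= _ -> _](_ : _ = \sum_i a i ^+ 2) //.
have : 0 < e * (- Ssum a l) by apply: mulr_gt0; lra.
rewrite expr2; nra.
Qed.

Lemma proj_S_gap m (v : 'I_m -> R) c (z p : 'I_m -> R) : (forall i, v i = c) ->
  is_proj (isoK_shift v) z p -> forall i0 j0 : 'I_m, val j0 = (val i0).+1 ->
  p i0 < p j0 -> Ssum (fun i => z i - p i) (val i0).+1 <= 0.
Proof.
move=> Hv [Hp Hmin] i0 j0 Hj0 Hg; set a := (fun i => z i - p i).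
have Hp' := (iso_shift_const _ Hv).1 Hp.
rewrite leNgt; apply/negP => HS.
set l := (val i0).+1.
set N := \sum_(i : 'I_m) (((i < l)%N)%:R : R).
have N0 : 0 <= N by apply: sumr_ge0 => i _; rewrite ler0n.
set e := Num.min (p j0 - p i0) (Ssum a l / (N + 1)).
have e0 : 0 < e by rewrite lt_min; apply/andP; split; [lra| rewrite divr_gt0 //; lra].
have eg : e <= p j0 - p i0 by rewrite ge_min lexx.
have eN : e * N <= Ssum a l.
  have : e <= Ssum a l / (N + 1) by rewrite ge_min lexx orbT.
  rewrite ler_pdivlMr; last lra.
  nra.
have := Hmin (fun i => p i + e * ((i < l)%N)%:R).
have Hx : isoK_shift v (fun i => p i + e * ((i < l)%N)%:R).
  apply/(iso_shift_const _ Hv) => i j Hij.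
  have Hpij := Hp' i j Hij.
  case: (ltnP j l) => Hj.
    by rewrite (leq_ltn_trans Hij Hj) /=; lra.
  case: (ltnP i l) => Hi; last by rewrite /=; lra.
  have H1 : p i <= p i0 by apply: Hp'; rewrite -ltnS.
  have H2 : p j0 <= p j by apply: Hp'; rewrite Hj0.
  rewrite /=; lra.
move=> /(_ Hx) /norm2_le.
have -> : \sum_i (z i - (p i + e * ((i < l)%N)%:R)) ^+ 2
   = \sum_i (a i + (- e) * ((fun i : 'I_m => (i < l)%N) i)%:R) ^+ 2.
  by apply: eq_bigr => i _; rewrite /a; congr (_ ^+ 2); ring.
rewrite sq_expand -/N -/(Ssum a l).
rewrite [X in X <= _ -> _](_ : _ = \sum_i a i ^+ 2) //.
have : 0 < e * Ssum a l by apply: mulr_gt0; lra.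
have : e * (e * N) <= e * Ssum a l by rewrite ler_pM2l.
rewrite expr2; nra.
Qed.

Lemma proj_gap m (v : 'I_m -> R) c (z p : 'I_m -> R) : (forall i, v i = c) ->
  is_proj (isoK_shift v) z p -> forall i0 j0 : 'I_m, val j0 = (val i0).+1 ->
  p i0 < p j0 -> z i0 <= z j0.
Proof.
move=> Hv Hpr i0 j0 Hj0 Hg.
have S1 : Ssum (fun i => z i - p i) (nat_of_ord i0).+1 <= 0 := proj_S_gap Hv Hpr Hj0 Hg.
have S0 : 0 <= Ssum (fun i => z i - p i) (nat_of_ord i0) := proj_S_ge0 Hv Hpr _.
have S2 : 0 <= Ssum (fun i => z i - p i) (nat_of_ord j0).+1 := proj_S_ge0 Hv Hpr _.
have D1 := Ssum_diff (fun i => z i - p i) i0.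
have D2 := Ssum_diff (fun i => z i - p i) j0.
have Hj0' : nat_of_ord j0 = (nat_of_ord i0).+1 := Hj0.
rewrite Hj0' in D2 S2.
lra.
Qed.

Lemma chain m (z : 'I_m -> R) eta :
  (forall i j : 'I_m, val j = (val i).+1 -> -eta <= z j - z i) ->
  forall n (i j : 'I_m), val j = (val i + n)%N -> -(eta * n%:R) <= z j - z i.
Proof.
move=> H; elim=> [|n IH] i j Hij.
  have -> : j = i by apply: val_inj; rewrite Hij addn0.
  by rewrite subrr mulr0 oppr0.
have Hl : (val i + n < m)%N.
  rewrite -addnS -Hij; exact: ltnW (ltn_ord j).
have := IH i (Ordinal Hl) erefl.
have := H (Ordinal Hl) j; rewrite /= Hij addnS => /(_ erefl).
rewrite -natr1; lra.
Qed.

Lemma sumsq_nat m : (3 * \sum_(i < m) i ^ 2 <= m ^ 3)%N.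
Proof.
elim: m => [|m IH]; first by rewrite big_ord0.
rewrite big_ord_recr /= mulnDr.
apply: (leq_trans (leq_add IH (leqnn _))).
have -> : (m.+1 ^ 3 = m ^ 3 + 3 * m ^ 2 + 3 * m + 1)%N.
  by rewrite -addn1 !expnS expn0 !muln1; ring.
by rewrite -addnA leq_addr.
Qed.

Lemma final_bound m (z : 'I_m -> R) eta : 0 < eta ->
  norm2 (fun i : 'I_m => z i - (z i + eta * (val i)%:R))
    <= eta * (m%:R * Num.sqrt m%:R) / Num.sqrt 3.
Proof.
move=> He.
have s3 : 0 < Num.sqrt (3 : R) by rewrite sqrtr_gt0 ltr0n.
have B0 : 0 <= eta * (m%:R * Num.sqrt m%:R) / Num.sqrt 3.
  by rewrite divr_ge0 ?mulr_ge0 ?sqrtr_ge0 ?ler0n // ltW.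
rewrite -(ger0_norm B0) -sqrtr_sqr /norm2 ler_sqrt ?sqr_ge0 //.
have -> : \sum_(i < m) (z i - (z i + eta * (val i)%:R)) ^+ 2
    = eta ^+ 2 * (\sum_(i < m) (val i) ^ 2)%N%:R.
  rewrite natr_sum mulr_sumr; apply: eq_bigr => i _.
  by rewrite natrX; ring.
rewrite expr_div_n !exprMn !sqr_sqrtr ?ler0n //.
rewrite -[X in _ <= X]mulrA ler_pM2l ?exprn_gt0 // ler_pdivlMr ?ltr0n //.
have := sumsq_nat m; rewrite -(ler_nat R) natrM natrX.
by rewrite mulrC -exprSr.
Qed.
End Aux.

Theorem lemma3 (R : realType) (m : nat) (alpha : 'I_m -> R)
  (Halpha_inc : forall i j : 'I_m, (i < j)%N -> alpha i < alpha j)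
  (Halpha01 : forall i : 'I_m, 0 < alpha i /\ alpha i < 1)
  (eta : R) (Heta : 0 < eta)
  (k y : nat -> R) (Rb : R)
  (Hbound : forall t : nat, (0 < t)%N -> `|y t - k t| <= Rb)
  (b : nat -> 'I_m -> R) (Hb : forall (t : nat) (i : 'I_m), (0 < t)%N -> b t i = k t)
  (thtil theta : nat -> 'I_m -> R)
  (Hinit : isoK (thtil 1%N))
  (Hproj : forall t : nat, (0 < t)%N ->
      is_proj (isoK_shift (b t)) (thtil t) (theta t))
  (Hupd : forall (t : nat) (i : 'I_m), (0 < t)%N ->
      thtil t.+1 i = thtil t i
        - eta * ((if y t <= b t i + theta t i then 1 else 0) - alpha i)) :
  forall t : nat, (0 < t)%N ->
    norm2 (fun i => theta t i - thtil t i)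
      <= eta * (m%:R * Num.sqrt m%:R) / Num.sqrt 3.
Proof.
have Inv : forall t, (0 < t)%N -> forall i j : 'I_m, val j = (val i).+1 ->
    -eta <= thtil t j - thtil t i.
  elim=> [//|t IH] _ i j Hij.
  have Hijle : (i <= j)%N by rewrite Hij.
  have Hijlt : (i < j)%N by rewrite Hij.
  case: (posnP t) => [->|Ht].
    have := Hinit i j Hijle; lra.
  have Hbt := fun i => Hb t i Ht.
  have Hpr := Hproj t Ht.
  have Hiso := (iso_shift_const _ Hbt).1 Hpr.1.
  have Hth := Hiso i j Hijle.
  have Ha := Halpha_inc i j Hijlt.
  have Hea : eta * alpha i <= eta * alpha j by rewrite ler_pM2l // ltW.
  have IHt := IH Ht i j Hij.
  rewrite !Hupd // !Hbt.
  have [Hlt|Hge] := ltP (theta t i) (theta t j).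
    have Hz := proj_gap Hbt Hpr Hij Hlt.
    case: ifP => _; case: ifP => _; lra.
  have -> : theta t j = theta t i by apply/eqP; rewrite eq_le Hge Hth.
  case: ifP => _; lra.
move=> t Ht.
have Hbt := fun i => Hb t i Ht.
have [Hp Hmin] := Hproj t Ht.
have Hch := chain (Inv t Ht).
have Hx : isoK_shift (b t) (fun i : 'I_m => thtil t i + eta * (nat_of_ord i)%:R).
  apply/(iso_shift_const _ Hbt) => i j Hij.
  have := Hch (j - i)%N i j (esym (subnKC Hij)).
  rewrite natrB // mulrBr; lra.
have := Hmin _ Hx.
have -> : norm2 (fun i => theta t i - thtil t i) = norm2 (fun i => thtil t i - theta t i).
  by rewrite /norm2; congr Num.sqrt; apply: eq_bigr => i _; rewrite -sqrrN opprB.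
move=> H; apply: le_trans H _.
exact: final_bound.
Qed.
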